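(* Let $\mathcal{G}=([N],[M],\mathsf{E})$ be an $(N,M,D,K,A)$-bipartite expander with $2A\ge D$, and let $\mathbf{H}_M$ be a Hadamard matrix of order $M$. Let $\mathbf{Q}\in\mathbb{R}^{MD\times N}$ be the pooling matrix constructed from $\mathcal{G}$ and $\mathbf{H}_M$ (as described in the context). Then for every $\bm{z}\in\{0,\pm1\}^N$ with $\lVert\bm{z}\rVert_0\le K$, \[ \lVert\mathbf{Q}\bm{z}\rVert_2^2\ \ge\ M(2A-D)\,\lVert\bm{z}\rVert_0, \qquad\text{and consequently}\qquad \lVert\mathbf{Q}\bm{z}\rVert_\infty\ \ge\ \sqrt{\tfrac{2A-D}{D}\,\lVert\bm{z}\rVert_0}. \]
   Context: A bipartite graph $\mathcal{G}=(\mathsf{L},\mathsf{R},\mathsf{E})$ with $\mathsf{L}=[N]=\{1,\dots,N\}$, $\mathsf{R}=[M]$ and edge set $\mathsf{E}\subseteq[N]\times[M]$ is left-$D$-regular if every left vertex $i$ has exactly $D$ neighbours; $\Gamma(i)$ denotes the set of neighbours of $i$ and $\Gamma(S)=\bigcup_{i\in S}\Gamma(i)$. It is an $(N,M,D,K,A)$-bipartite expander if it is left-$D$-regular and $|\Gamma(S)|\ge A|S|$ for every $S\subseteq[N]$ with $|S|\le K$. The induced matrix $\mathbf{B}_{\mathcal{G}}\in\{0,1\}^{M\times N}$ has $(j,i)$-entry $1$ iff $(i,j)\in\mathsf{E}$ (so each column has exactly $D$ ones). A Hadamard matrix of order $M$ is an $M\times M$ matrix $\mathbf{H}_M$ with entries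 $\pm1$ and $\mathbf{H}_M^{\intercal}\mathbf{H}_M=M\mathbf{I}$. Construction of $\mathbf{Q}$: write $\mathbf{B}_{\mathcal{G}}=\sum_{i=1}^D\mathbf{B}_i$ with each $\mathbf{B}_i\in\{0,1\}^{M\times N}$ having exactly one nonzero entry in each column (i.e. distribute the $D$ ones of each column among the $D$ matrices, one each); set $\mathbf{D}_i=\mathbf{H}_M\mathbf{B}_i$ and $\mathbf{Q}=\begin{bmatrix}\mathbf{D}_1\\ \vdots\\ \mathbf{D}_D\end{bmatrix}$. $\lVert\cdot\rVert_0$ counts nonzero entries. *)

(* Defs.v *)
From HB Require Import structures.
From mathcomp Require Import all_boot all_order all_algebra.
Set Implicit Arguments. Unset Strict Implicit. Unset Printing Implicit Defensive.
Import Order.TTheory GRing.Theory Num.Theory.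
Local Open Scope ring_scope.

Definition nbhd (N M : nat) (E : {set 'I_N * 'I_M}) (i : 'I_N) : {set 'I_M} :=
  [set j | (i, j) \in E].

Definition nbhdS (N M : nat) (E : {set 'I_N * 'I_M}) (S : {set 'I_N}) : {set 'I_M} :=
  \bigcup_(i in S) nbhd E i.

Definition left_regular (N M D : nat) (E : {set 'I_N * 'I_M}) : Prop :=
  forall i : 'I_N, #|nbhd E i| = D.

Definition bipartite_expander (R : numDomainType) (N M D K : nat) (A : R)
    (E : {set 'I_N * 'I_M}) : Prop :=
  left_regular D E /\
  forall S : {set 'I_N}, (#|S| <= K)%N -> A * #|S|%:R <= #|nbhdS E S|%:R.

Definition induced_matrix (R : nzRingType) (N M : nat) (E : {set 'I_N * 'I_M})
  : 'M[R]_(M, N) := \matrix_(j < M, i < N) ((i, j) \in E)%:R.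

Definition hadamard (R : nzRingType) (M : nat) (H : 'M[R]_M) : Prop :=
  (forall i j, H i j = 1 \/ H i j = -1) /\ H^T *m H = (M%:R)%:M.

Definition valid_split (R : nzRingType) (N M D : nat) (E : {set 'I_N * 'I_M})
    (Bs : 'I_D -> 'M[R]_(M, N)) : Prop :=
  (forall d j i, Bs d j i = 0 \/ Bs d j i = 1) /\
  (forall d i, #|[set j | Bs d j i != 0]| = 1%N) /\
  \sum_(d < D) Bs d = induced_matrix R E.

Definition pooling_matrix (R : nzRingType) (N M D : nat) (H : 'M[R]_M)
    (Bs : 'I_D -> 'M[R]_(M, N)) : 'M[R]_(\sum_(d < D) M, N) :=
  \mxcol_(d < D) (H *m Bs d).

Definition l0norm (R : nzRingType) (n : nat) (z : 'cV[R]_n) : nat :=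
  #|[set i | z i 0 != 0]|.

Definition sqnorm2 (R : nzRingType) (n : nat) (z : 'cV[R]_n) : R :=
  \sum_(i < n) z i 0 ^+ 2.

Definition linfnorm (R : numDomainType) (n : nat) (z : 'cV[R]_n) : R :=
  \big[Num.max/0]_(i < n) `|z i 0|.

(* Main.v *)
Require Import Defs.
From HB Require Import structures.
From mathcomp Require Import all_boot all_order all_algebra.
From mathcomp Require Import zify ring lra.
Set Implicit Arguments. Unset Strict Implicit. Unset Printing Implicit Defensive.
Import Order.TTheory GRing.Theory Num.Theory.
Local Open Scope ring_scope.

Lemma sqnorm2E (R : nzRingType) n (v : 'cV[R]_n) : sqnorm2 v = (v^T *m v) 0 0.
Proof. rewrite /sqnorm2 !mxE; apply: eq_bigr => i _; by rewrite !mxE expr2. Qed.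

Lemma sqnorm2_col (R : comNzRingType) D (p_ : 'I_D -> nat) (C : forall d, 'cV[R]_(p_ d)) :
  sqnorm2 (\mxcol_d C d) = \sum_d sqnorm2 (C d).
Proof.
rewrite sqnorm2E tr_mxcol mul_mxrow_mxcol summxE; apply: eq_bigr => d _.
by rewrite sqnorm2E.
Qed.

Lemma sqnorm2_had (R : comNzRingType) M (H : 'M[R]_M) (v : 'cV[R]_M) :
  hadamard H -> sqnorm2 (H *m v) = M%:R * sqnorm2 v.
Proof.
case=> _ hH; rewrite !sqnorm2E trmx_mul mulmxA -(mulmxA _ _ H) hH.
by rewrite mul_mx_scalar -scalemxAl mxE.
Qed.

Lemma sqnorm2_ge0 (R : realDomainType) n (v : 'cV[R]_n) : 0 <= sqnorm2 v.
Proof. by apply: sumr_ge0 => i _; exact: sqr_ge0. Qed.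

Lemma linf_ge0 (R : realDomainType) n (v : 'cV[R]_n) : 0 <= linfnorm v.
Proof.
rewrite /linfnorm; elim/big_rec: _ => // i x _ hx; by rewrite le_max hx orbT.
Qed.

Lemma sqnorm2_linf (R : realDomainType) n (v : 'cV[R]_n) :
  sqnorm2 v <= n%:R * linfnorm v ^+ 2.
Proof.
have le i : `|v i 0| <= linfnorm v.
  rewrite /linfnorm; rewrite (bigD1 i) //=. by rewrite le_max lexx.
have -> : n%:R * linfnorm v ^+ 2 = \sum_(i < n) linfnorm v ^+ 2.
  by rewrite sumr_const card_ord mulr_natl.
apply: ler_sum => i _; rewrite -(real_normK (num_real (v i 0))).
apply: lerXn2r; rewrite ?nnegrE ?normr_ge0 ?linf_ge0 //.
Qed.


Lemma card_sumE (T : finType) (p : pred T) : #|[set x | p x]| = (\sum_x (p x : nat))%N.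
Proof. by rewrite -sum1dep_card big_mkcond /=; apply: eq_bigr => x _; case: (p x). Qed.

Lemma local_bound (R : realDomainType) M N (B : 'M[R]_(M, N)) (z : 'cV[R]_N) (j : 'I_M) :
  (forall j i, B j i = 0 \/ B j i = 1) ->
  (forall i, z i 0 = 0 \/ z i 0 = 1 \/ z i 0 = -1) ->
  2 * (leq 1 #|[set i | (z i 0 != 0) && (B j i != 0)]|)%:R
    - #|[set i | (z i 0 != 0) && (B j i != 0)]|%:R <= (B *m z) j 0 ^+ 2.
Proof.
move=> hB hz; set c := #|[set i | (z i 0 != 0) && (B j i != 0)]|.
have out i : i \notin [set i | (z i 0 != 0) && (B j i != 0)] -> B j i * z i 0 = 0.
  rewrite inE negb_and !negbK => /orP[/eqP -> | /eqP ->]; by rewrite ?mulr0 ?mul0r.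
have val : (B *m z) j 0 = \sum_i B j i * z i 0 by rewrite mxE.
case: (ltnP 1 c) => hc.
  apply: le_trans (sqr_ge0 _).
  have h1 : (0 < c)%N by lia.
  have : (2%:R <= c%:R :> R) by rewrite ler_nat.
  rewrite h1 /=; lra.
case hc0: (c == 0)%N.
  have -> : (B *m z) j 0 = 0.
    rewrite val big1 // => i _; apply: out.
    by move: hc0; rewrite /c cards_eq0 => /eqP ->; rewrite inE.
  by rewrite (eqP hc0) /= mulr0 subrr expr2 mulr0.
have c1 : c = 1%N by move/negbT: hc0; lia.
have := c1; rewrite /c => /eqP/cards1P [i0 hi0].
have hin : i0 \in [set i | (z i 0 != 0) && (B j i != 0)] by rewrite hi0 set11.
rewrite val (bigD1 i0) //= big1 ?addr0; last first.
  by move=> i hi; apply: out; rewrite hi0 inE.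
move: hin; rewrite inE => /andP [hz0 hB0].
have -> : B j i0 = 1 by case: (hB j i0) => // h; rewrite h eqxx in hB0.
rewrite hi0 cards1 /= mul1r mulr1.
case: (hz i0) => [h|[h|h]]; first by rewrite h eqxx in hz0.
  by rewrite h expr1n; lra.
by rewrite h sqrrN expr1n; lra.
Qed.

Lemma count_T2 (R : nzRingType) M N D (Bs : 'I_D -> 'M[R]_(M, N)) (P : pred 'I_N) (d : 'I_D) :
  (forall d i, #|[set j | Bs d j i != 0]| = 1%N) ->
  (\sum_(j < M) #|[set i | P i && (Bs d j i != 0%R)]| = #|[set i | P i]|)%N.
Proof.
move=> h1.
under eq_bigr do rewrite card_sumE.
rewrite exchange_big card_sumE; apply: eq_bigr => i _.
case: (P i) => /=; last by rewrite big1.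
by rewrite -card_sumE h1.
Qed.

Lemma count_T1 (R : nzRingType) M N D (E : {set 'I_N * 'I_M}) (Bs : 'I_D -> 'M[R]_(M, N)) (P : pred 'I_N) :
  \sum_(d < D) Bs d = induced_matrix R E ->
  (#|nbhdS E [set i | P i]| <= \sum_(d < D) \sum_(j < M) (0 < #|[set i | P i && (Bs d j i != 0%R)]|))%N.
Proof.
move=> hsum; rewrite exchange_big -cardsE card_sumE /=; apply: leq_sum => j _.
case hj: (j \in nbhdS E [set i | P i]) => //.
move/bigcupP: hj => [i iS]; rewrite inE => hE.
have : induced_matrix R E j i = 1 by rewrite mxE hE.
rewrite -hsum summxE => hs.
have [d hd] : exists d, Bs d j i != 0.
  apply/existsP; apply: contraLR isT => /existsPn hall.
  move: hs; rewrite big1 => [h|d _]; first by move: (@oner_neq0 R); rewrite h eqxx.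
  by apply/eqP; rewrite -[_ == _]negbK hall.
rewrite (bigD1 d) //=.
have -> : (0 < #|[set i | P i && (Bs d j i != 0%R)]|)%N.
  by apply/card_gt0P; exists i; rewrite inE in iS; rewrite inE iS hd.
by [].
Qed.

Lemma comb (R : realDomainType) M N D (E : {set 'I_N * 'I_M}) (Bs : 'I_D -> 'M[R]_(M, N))
  (z : 'cV[R]_N) :
  valid_split E Bs ->
  (forall i, z i 0 = 0 \/ z i 0 = 1 \/ z i 0 = -1) ->
  2 * #|nbhdS E [set i | z i 0 != 0]|%:R - D%:R * #|[set i | z i 0 != 0]|%:R
    <= \sum_(d < D) sqnorm2 (Bs d *m z).
Proof.
move=> [h01 [h1 hsum]] hz.
set P : pred 'I_N := fun i => z i 0 != 0.
have e1 := count_T1 P hsum.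
have e2 d := @count_T2 _ _ _ _ Bs P d h1.
apply: le_trans (_ : \sum_(d < D) \sum_(j < M)
   (2 * (leq 1 #|[set i | (z i 0 != 0) && (Bs d j i != 0)]|)%:R
    - #|[set i | (z i 0 != 0) && (Bs d j i != 0)]|%:R) <= _); last first.
  apply: ler_sum => d _; apply: ler_sum => j _; exact: local_bound.
under eq_bigr do rewrite sumrB -mulr_sumr -!natr_sum e2.
rewrite sumrB -mulr_sumr -natr_sum sumr_const card_ord -mulr_natl -natrM.
apply: lerB.
  apply: ler_wpM2l; first lra.
  rewrite ler_nat; exact: e1.
by rewrite natrM mulr_natl.
Qed.

Theorem mainTheorem2 (R : rcfType) (N M D K : nat) (A : R)
    (E : {set 'I_N * 'I_M}) (H : 'M[R]_M) (Bs : 'I_D -> 'M[R]_(M, N)) :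
  bipartite_expander D K A E ->
  D%:R <= 2 * A ->
  hadamard H ->
  valid_split E Bs ->
  forall z : 'cV[R]_N,
    (forall i, z i 0 = 0 \/ z i 0 = 1 \/ z i 0 = -1) ->
    (l0norm z <= K)%N ->
    M%:R * (2 * A - D%:R) * (l0norm z)%:R <= sqnorm2 (pooling_matrix H Bs *m z) /\
    Num.sqrt ((2 * A - D%:R) / D%:R * (l0norm z)%:R)
      <= linfnorm (pooling_matrix H Bs *m z).
Proof.
move=> [hreg hexp] hDA hH hsplit z hz hK.
have eQ : pooling_matrix H Bs *m z = \mxcol_d (H *m (Bs d *m z)).
  by rewrite /pooling_matrix mxcol_mul; apply: eq_mxcol => d; rewrite mulmxA.
have hsq : sqnorm2 (pooling_matrix H Bs *m z) = M%:R * \sum_d sqnorm2 (Bs d *m z).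
  rewrite eQ sqnorm2_col mulr_sumr; apply: eq_bigr => d _; exact: sqnorm2_had.
have hG := hexp _ hK.
have hc := comb hsplit hz.
rewrite /l0norm in hG *.
set s := #|[set i | z i 0 != 0]| in hG hc *.
set G := #|nbhdS E [set i | z i 0 != 0]| in hG hc.
set X := \sum_d sqnorm2 (Bs d *m z) in hc hsq.
have part1 : M%:R * (2 * A - D%:R) * s%:R <= sqnorm2 (pooling_matrix H Bs *m z).
  rewrite hsq -mulrA; apply: ler_wpM2l => //.
  nra.
split => //.
case: (posnP D) => [D0|Dpos].
  have -> : D%:R = 0 :> R by rewrite D0.
  by rewrite invr0 mulr0 mul0r sqrtr0 linf_ge0.
case: (posnP s) => [s0|spos].
  by rewrite s0 mulr0 sqrtr0 linf_ge0.
have Mpos : (0 < M)%N.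
  have [i hi] : exists i, i \in [set i | z i 0 != 0] by apply/card_gt0P.
  case: hsplit => _ [h1 _].
  have := h1 (Ordinal Dpos) i; move=> hh.
  have := max_card [set j | Bs (Ordinal Dpos) j i != 0]; rewrite hh card_ord.
  by [].
set L := linfnorm _.
have hL := sqnorm2_linf (pooling_matrix H Bs *m z).
have eS : (\sum_(d < D) M)%:R = (D * M)%:R :> R by rewrite sum_nat_const card_ord.
rewrite eS in hL.
rewrite -/L in hL.
rewrite -[L]ger0_norm ?linf_ge0 // -sqrtr_sqr ler_sqrt ?sqr_ge0 //.
have DMpos : 0 < (D * M)%:R :> R by rewrite ltr0n muln_gt0 Dpos Mpos.
rewrite -(ler_pM2l DMpos).
apply: (le_trans _ (le_trans part1 hL)).
rewrite natrM.
have Dn0 : D%:R != 0 :> R by rewrite pnatr_eq0 -lt0n.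
have -> : (D%:R * M%:R) * ((2 * A - D%:R) / D%:R * s%:R) = M%:R * (2 * A - D%:R) * s%:R.
  by field.
by [].
Qed.
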